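(* Let $F$ and $G$ be topological groups with $F$ Hausdorff, and let $\mathcal R(F,G)$ be the space of continuous homomorphisms $F\to G$ with the compact-open topology. Then the maps $E:\mathcal R(F,G)\to\mathrm{Map}^\bullet(EF,EG)$, $\phi\mapsto E\phi$, and $B:\mathcal R(F,G)\to\mathrm{Map}^\bullet(BF,BG)$, $\phi\mapsto B\phi$, are continuous, where the target spaces of pointed continuous maps carry the compact-open topology.
   Context: For a topological group $P$, Milnor's $EP$ consists of sequences $(t_jp_j)_{j\in\mathbb N}$ with $t_j\in[0,1]$ (finitely many nonzero, summing to 1), $p_j\in P$ (with $p_j$ irrelevant when $t_j=0$); it carries the coarsest topology making continuous the maps $\tau_i((t_jp_j))=t_i$ and $\gamma_i:\tau_i^{-1}(]0,1])\to P$, $\gamma_i((t_jp_j))=p_i$. $P$ acts on the right by $(t_jp_j)\cdot p=(t_jp_jp)$, $BP=EP/P$; base point of $EP$ is $(1e,0,0,\dots)$ and of $BP$ its image. For $\phi:F\to G$, $E\phi((t_jf_j))=(t_j\phi(f_j))$ and $B\phi$ is the induced map $BF\to BG$. *)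

(* Defs.v *)
From HB Require Import structures.
From mathcomp Require Import all_boot all_order all_algebra.
From mathcomp Require Import all_classical all_reals all_analysis.
From mathcomp Require Import Rstruct Rstruct_topology.


Set Implicit Arguments.
Unset Strict Implicit.
Unset Printing Implicit Defensive.

Import Order.TTheory GRing.Theory Num.Theory.
Local Open Scope classical_set_scope.
Local Open Scope ring_scope.

Record TopGroup := {
  tg_car :> topologicalType;
  tg_mul : tg_car -> tg_car -> tg_car;
  tg_inv : tg_car -> tg_car;
  tg_one : tg_car;
  tg_mulA : forall x y z, tg_mul x (tg_mul y z) = tg_mul (tg_mul x y) z;
  tg_mul1 : forall x, tg_mul tg_one x = x;
  tg_mulV : forall x, tg_mul (tg_inv x) x = tg_one;
  tg_mul_cont : continuous (fun xy : tg_car * tg_car => tg_mul xy.1 xy.2);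
  tg_inv_cont : continuous tg_inv }.

Definition is_hom (F G : TopGroup) (phi : F -> G) :=
  forall x y, phi (tg_mul x y) = tg_mul (phi x) (phi y).

(** A point (t_j p_j)_j is represented by the pair of sequences (t, p), with
   the convention p_j = e whenever t_j = 0 (p_j is irrelevant there), which
   gives a canonical representative of each point. *)
Definition EPcond (P : TopGroup) (x : (nat -> Rdefinitions.R) * (nat -> P)) : Prop :=
  [/\ forall j, 0 <= x.1 j <= 1,
      exists n : nat, (forall j : nat, (n <= j)%N -> x.1 j = 0) /\ \sum_(j < n) x.1 j = 1
    & forall j, x.1 j = 0 -> x.2 j = tg_one P].

Definition EP (P : TopGroup) := {x : (nat -> Rdefinitions.R) * (nat -> P) | EPcond x}.

HB.instance Definition _ (P : TopGroup) := gen_eqMixin (EP P).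
HB.instance Definition _ (P : TopGroup) := gen_choiceMixin (EP P).

Definition tau (P : TopGroup) (i : nat) (x : EP P) : Rdefinitions.R := (sval x).1 i.
Definition gam (P : TopGroup) (i : nat) (x : EP P) : P := (sval x).2 i.

(** Subbase of the topology of EP: preimages tau_i^{-1}(U), U open, and
    gamma_i^{-1}(V) = {x | tau_i x > 0 /\ p_i in V}, V open (gamma_i is
    defined on the open set tau_i^{-1}(]0,1])). *)
Definition EP_subbase (P : TopGroup) : set (set (EP P)) :=
  [set S | (exists i (U : set Rdefinitions.R), open U /\ S = tau i @^-1` U) \/
           (exists i (V : set P), open V /\
              S = [set x | 0 < tau i x /\ V (gam i x)])].

HB.instance Definition _ (P : TopGroup) :=
  isPointed.Build (set (EP P)) set0.

HB.instance Definition _ (P : TopGroup) :=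
  @isSubBaseTopological.Build (EP P) (set (EP P)) (@EP_subbase P) id.

Lemma EPbase_cond (P : TopGroup) :
  EPcond ((fun j => if j == 0%N then 1 else 0), (fun _ => tg_one P)).
Proof.
split => //=.
- by move=> j; case: (j == 0%N); rewrite ?lexx ?ler01.
- by exists 1%N; split; [by case | rewrite big_ord1].
Qed.

Definition EPbase (P : TopGroup) : EP P := exist _ _ (EPbase_cond P).

(** * BP = EP / P: points are the orbits of the right P-action
      (t_j p_j) . g = (t_j (p_j g)), with the quotient topology. *)
Definition orbit (P : TopGroup) (x : EP P) : set (EP P) :=
  [set y | exists g : P, forall j, tau j y = tau j x /\
                         (tau j x <> 0 -> gam j y = tg_mul (gam j x) g)].

Definition BP (P : TopGroup) := {S : set (EP P) | exists x, S = orbit x}.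

HB.instance Definition _ (P : TopGroup) := gen_eqMixin (BP P).
HB.instance Definition _ (P : TopGroup) := gen_choiceMixin (BP P).

Definition BPproj (P : TopGroup) (x : EP P) : BP P :=
  exist _ (orbit x) (ex_intro _ x erefl).

Definition BP_open (P : TopGroup) : set (set (BP P)) :=
  [set U : set (BP P) | open (@BPproj P @^-1` U)].

Lemma BP_openT (P : TopGroup) : @BP_open P setT.
Proof. by rewrite /BP_open /= preimage_setT; exact: openT. Qed.

Lemma BP_openI (P : TopGroup) : setI_closed (@BP_open P).
Proof. by move=> A B oA oB; rewrite /BP_open /= preimage_setI; exact: openI. Qed.

Lemma BP_open_bigU (P : TopGroup) (I : Type) (f : I -> set (BP P)) :
  (forall i, @BP_open P (f i)) -> @BP_open P (\bigcup_i f i).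
Proof.
by move=> H; rewrite /BP_open /= preimage_bigcup; apply: bigcup_open => i _; exact: H.
Qed.

HB.instance Definition _ (P : TopGroup) :=
  @isOpenTopological.Build (BP P) (@BP_open P) (BP_openT P) (@BP_openI P)
    (@BP_open_bigU P).

Definition BPbase (P : TopGroup) : BP P := BPproj (EPbase P).

Lemma Emap_cond (F G : TopGroup) (phi : F -> G) (x : EP F) :
  EPcond (fun j => tau j x, fun j => if tau j x == 0 then tg_one G else phi (gam j x)).
Proof.
case: x => [[t p] [H1 H2 H3]]; split => //= j.
by rewrite /tau /= => ->; rewrite eqxx.
Qed.

Definition Emap (F G : TopGroup) (phi : F -> G) (x : EP F) : EP G :=
  exist _ _ (Emap_cond phi x).

Definition BPrep (P : TopGroup) (S : BP P) : EP P := projT1 (cid (svalP S)).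

(** B phi: the induced map BF -> BG, [x] |-> [E phi x]
    (independent of the representative when phi is a homomorphism) *)
Definition Bmap (F G : TopGroup) (phi : F -> G) (S : BP F) : BP G :=
  BPproj (Emap phi (BPrep S)).

Definition contHom (F G : TopGroup) : set {compact-open, F -> G} :=
  [set phi | continuous (phi : F -> G) /\ is_hom phi].

Definition pointed_cont_map (X Y : topologicalType) (x0 : X) (y0 : Y) :
  set {compact-open, X -> Y} :=
  [set f | continuous (f : X -> Y) /\ f x0 = y0].

(* Main.v *)
Require Import Defs.
From HB Require Import structures.
From mathcomp Require Import all_boot all_order all_algebra.
From mathcomp Require Import all_classical all_reals all_analysis.
From mathcomp Require Import Rstruct Rstruct_topology.
Local Open Scope classical_set_scope.
From mathcomp Require Import finmap.
Set Implicit Arguments.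
Unset Strict Implicit.
Unset Printing Implicit Defensive.
Import Order.TTheory GRing.Theory Num.Theory.
Local Open Scope ring_scope.

Section EPtop.
Variable P : TopGroup.

Lemma EP_sub_open (S : set (EP P)) : EP_subbase S -> open S.
Proof.
move=> HS.
exists [set S]; last by rewrite bigcup_set1.
move=> _ ->; exists [fset S]%fset.
  by move=> s; rewrite inE => /eqP ->; apply/mem_set.
by rewrite bigcap_fset big_seq_fset1.
Qed.

Lemma EP_nbhsP (y : EP P) (A : set (EP P)) : nbhs y A ->
  exists D : {fset (set (EP P))}, [/\ {subset D <= EP_subbase (P:=P)},
     (\bigcap_(i in [set` D]) i) y & \bigcap_(i in [set` D]) i `<=` A].
Proof.
case=> B [[D' sD' <-] [i D'i iy] sBA].
have [D sD Di] := sD' _ D'i.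
exists D; split.
- by move=> s /sD.
- by have := iy; rewrite -Di.
- by move=> z; rewrite [X in X z]Di => iz; apply: sBA; exists i.
Qed.
End EPtop.
Section EPcrit.
Variable P : TopGroup.
Lemma EP_filter_crit (Z : Type) (F : set_system Z) (FF : Filter F)
  (g : Z -> EP P) (C : set Z) (y : EP P) :
  (forall S, EP_subbase S -> S y -> F [set z | C z -> S (g z)]) ->
  forall A, nbhs y A -> F [set z | C z -> A (g z)].
Proof.
move=> H A /EP_nbhsP [D [sD Dy DA]].
have : F (\bigcap_(S in [set` D]) [set z | C z -> S (g z)]).
  apply: filter_bigI => S SD; apply: H; first exact/set_mem/sD.
  by apply: Dy.
apply: filterS => z Hz Cz; apply: DA => S SD; exact: Hz.
Qed.
End EPcrit.

Section Group.
Variable P : TopGroup.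
Local Notation mul := (@tg_mul P).
Local Notation inv := (@tg_inv P).
Local Notation one := (@tg_one P).

Lemma mulgV (x : P) : mul x (inv x) = one.
Proof.
have yy : mul (mul x (inv x)) (mul x (inv x)) = mul x (inv x).
  by rewrite -tg_mulA (tg_mulA (inv x)) tg_mulV tg_mul1.
have := congr1 (mul (inv (mul x (inv x)))) yy.
by rewrite tg_mulA tg_mulV tg_mul1.
Qed.

Lemma mulg1 (x : P) : mul x one = x.
Proof. by rewrite -(tg_mulV x) tg_mulA mulgV tg_mul1. Qed.

Lemma mulKg (x y : P) : mul (inv x) (mul x y) = y.
Proof. by rewrite tg_mulA tg_mulV tg_mul1. Qed.

Lemma mulgK (x y : P) : mul (mul y x) (inv x) = y.
Proof. by rewrite -tg_mulA mulgV mulg1. Qed.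

Lemma mulIg (x y z : P) : mul y x = mul z x -> y = z.
Proof. by move=> /(congr1 (fun a => mul a (inv x))); rewrite !mulgK. Qed.

Lemma invMg (x y : P) : inv (mul x y) = mul (inv y) (inv x).
Proof.
apply: (@mulIg (mul x y)); rewrite tg_mulV -tg_mulA (tg_mulA (inv x)).
by rewrite tg_mulV tg_mul1 tg_mulV.
Qed.
End Group.

Section Hom.
Variables F G : TopGroup.
Lemma hom1 (phi : F -> G) : is_hom phi -> phi (tg_one F) = tg_one G.
Proof.
move=> h; apply: (@mulIg _ (phi (tg_one F))).
by rewrite -h !tg_mul1.
Qed.
Lemma homV (phi : F -> G) x : is_hom phi -> phi (tg_inv x) = tg_inv (phi x).
Proof.
move=> h; apply: (@mulIg _ (phi x)).
by rewrite -h !tg_mulV hom1.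
Qed.
End Hom.

Section EPbasic.
Variable P : TopGroup.
Lemma EP_eq (x y : EP P) : (forall j, tau j x = tau j y) ->
  (forall j, gam j x = gam j y) -> x = y.
Proof.
case: x y => [[t p] hx] [[t' p'] hy] /= ht hg.
have et : t = t' by apply: funext => j; exact: ht.
have ep : p = p' by apply: funext => j; exact: hg.
subst; congr exist; exact: Prop_irrelevance.
Qed.

Lemma EP_tau_ge0 (x : EP P) j : 0 <= tau j x.
Proof. by case: x => [[t p] [h1 h2 h3]]; rewrite /tau /=; case/andP: (h1 j). Qed.

Lemma EP_gam0 (x : EP P) j : tau j x = 0 -> gam j x = tg_one P.
Proof. by case: x => [[t p] [h1 h2 h3]]; exact: h3. Qed.
End EPbasic.
Section Orbit.
Variable P : TopGroup.
Local Notation mul := (@tg_mul P).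
Local Notation inv := (@tg_inv P).
Local Notation one := (@tg_one P).

Lemma orbit_refl (x : EP P) : Defs.orbit x x.
Proof. by exists one => j; split => // _; rewrite mulg1. Qed.

Lemma orbit_sym (x y : EP P) : Defs.orbit x y -> Defs.orbit y x.
Proof.
case=> g H; exists (inv g) => j; have [h1 h2] := H j; split => // h.
by rewrite h2 -?h1 // mulgK.
Qed.

Lemma orbit_trans (x y z : EP P) : Defs.orbit x y -> Defs.orbit y z -> Defs.orbit x z.
Proof.
case=> g H [h K]; exists (mul g h) => j; have [h1 h2] := H j.
have [k1 k2] := K j; split; first by rewrite k1.
by move=> nz; rewrite k2 ?h1 // h2 // tg_mulA.
Qed.

Lemma orbit_eq (x y : EP P) : Defs.orbit x y -> Defs.orbit x = Defs.orbit y.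
Proof.
move=> xy; apply/funext => z; apply/propext; split => Hz.
  exact: orbit_trans (orbit_sym xy) Hz.
exact: orbit_trans xy Hz.
Qed.

Lemma BPprojP (x y : EP P) : BPproj x = BPproj y <-> Defs.orbit x y.
Proof.
split.
  move=> /(congr1 sval) /= ->; exact: orbit_refl.
by move=> /orbit_eq e; apply: eq_exist.
Qed.

Lemma BPrepK (b : BP P) : BPproj (BPrep b) = b.
Proof.
rewrite /BPrep; case: (cid (svalP b)) => r /= e.
by case: b e => S pS /= e; apply: eq_exist.
Qed.

Lemma orbit_rep (x : EP P) : Defs.orbit x (BPrep (BPproj x)).
Proof. by apply/orbit_sym/BPprojP; rewrite BPrepK. Qed.
End Orbit.

Section Emap.
Variables F G : TopGroup.
Lemma Emap_orbit (phi : F -> G) (x y : EP F) : is_hom phi -> Defs.orbit x y ->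
  Defs.orbit (Emap phi x) (Emap phi y).
Proof.
move=> h [g H]; exists (phi g) => j; have [h1 h2] := H j.
split; first by rewrite /tau /= -/(tau j y) -/(tau j x) h1.
rewrite /gam /tau /= -/(tau j y) -/(tau j x) -/(gam j y) -/(gam j x) h1.
by case: eqP => // nz _; rewrite h2 // h.
Qed.

Lemma Bmap_proj (phi : F -> G) (x : EP F) : is_hom phi ->
  Bmap phi (BPproj x) = BPproj (Emap phi x).
Proof.
move=> h; rewrite /Bmap; apply/BPprojP; apply: orbit_sym.
exact/Emap_orbit/orbit_rep.
Qed.

Lemma Emap_base (phi : F -> G) : is_hom phi -> Emap phi (EPbase F) = EPbase G.
Proof.
move=> h; apply: EP_eq => j //; rewrite /gam /tau /=.
by case: ifP => _ //; rewrite hom1.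
Qed.
End Emap.
Section Cont.
Variable P : TopGroup.

Lemma EP_sub_tau i (U : set Rdefinitions.R) : open U -> open (tau (P:=P) i @^-1` U).
Proof. by move=> oU; apply: EP_sub_open; left; exists i, U. Qed.

Lemma EP_sub_gam i (V : set P) : open V ->
  open [set x : EP P | 0 < tau i x /\ V (gam i x)].
Proof. by move=> oV; apply: EP_sub_open; right; exists i, V. Qed.

Lemma gam_cont i (y : EP P) : 0 < tau i y -> gam i @ nbhs y --> gam i y.
Proof.
move=> ty A; rewrite nbhsE => -[V [oV Vy] VA].
apply: (@filterS _ _ _ [set x : EP P | 0 < tau i x /\ V (gam i x)]).
  by move=> z [_ /VA].
by apply: open_nbhs_nbhs; split; [exact: EP_sub_gam|].
Qed.

Lemma tau_cont i : continuous (tau (P:=P) i).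
Proof.
move=> y A; rewrite nbhsE => -[V [oV Vy] VA].
apply: (@filterS _ _ _ (tau i @^-1` V)); first by move=> z /VA.
by apply: open_nbhs_nbhs; split; [exact: EP_sub_tau|].
Qed.
End Cont.

Section EmapCont.
Variables F G : TopGroup.

Lemma Emap_cont (phi : F -> G) : continuous phi -> continuous (Emap phi).
Proof.
move=> cphi x A nA.
suff H : nbhs x [set z | setT z -> A (Emap phi z)] by apply: filterS H => z; apply.
apply: (@EP_filter_crit G _ (nbhs x) _ (Emap phi) setT (Emap phi x) _ A nA).
move=> S [[i [U [oU ->]]]|[i [V [oV ->]]]] /= Sx.
  by apply: filterS (open_nbhs_nbhs _) => [z /= Uz _|]; [exact: Uz| split; [exact: EP_sub_tau|]].
case: Sx => tx; rewrite /gam /= -/(tau i x) (gt_eqF tx) => Vx.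
apply: (@filterS _ _ _ [set z : EP F | 0 < tau i z /\ (phi @^-1` V) (gam i z)]).
  by move=> z [tz Vz] _; split => //; rewrite (gt_eqF tz).
apply: open_nbhs_nbhs; split => //; apply: EP_sub_gam.
by move/continuousP: cphi; apply.
Qed.

Lemma Bmap_cont (phi : F -> G) : continuous phi -> is_hom phi ->
  continuous (Bmap phi).
Proof.
move=> cphi hphi; apply/continuousP => A oA.
change (open (@BPproj F @^-1` (Bmap phi @^-1` A))).
have -> : @BPproj F @^-1` (Bmap phi @^-1` A) = Emap phi @^-1` (@BPproj G @^-1` A).
  by apply/funext => z /=; rewrite Bmap_proj.
by move/continuousP: (Emap_cont cphi); apply.
Qed.
End EmapCont.
Lemma nbhs_subE (T : topologicalType) (A : set T) (x : T) : A x ->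
  nbhs (x : subspace A) = within A (nbhs x).
Proof. by move=> Ax; case: (nbhs_subspaceP A x). Qed.

Section KeyE.
Variables F G : TopGroup.
Hypothesis hF : hausdorff_space F.

Lemma Emap_co_local (phi : {compact-open, F -> G}) (K : set (EP F)) (O : set (EP G)) (x : EP F) :
  continuous (phi : F -> G) -> compact K -> open O -> O (Emap phi x) -> K x ->
  \forall x' \near x & psi \near (nbhs phi), K x' -> O (Emap psi x').
Proof.
move=> cphi cK oO Ox Kx.
have nO : nbhs (Emap phi x) O by exact: open_nbhs_nbhs.
apply: (@EP_filter_crit G _ (filter_prod (nbhs x) (nbhs phi)) _
  (fun z => Emap z.2 z.1) (fun z => K z.1) (Emap phi x) _ O nO).
move=> S [[i [U [oU ->]]]|[i [V [oV ->]]]] /= Sx.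
  exists (tau i @^-1` U, setT); last by case=> a b /= [].
  split; last exact: filterT.
  by apply: open_nbhs_nbhs; split; [exact: EP_sub_tau|].
case: Sx => tx; rewrite /gam /= -/(tau i x) (gt_eqF tx) => Vx.
have {}tx : 0 < tau i x := tx.
set t := tau i x in tx.
pose K' := K `&` (tau i @^-1` [set r | t / 2 <= r]).
have cK' : compact K'.
  apply: compact_closedI => //; apply: preimage_closed; last exact: closed_ge.
  by move=> y _; exact: tau_cont.
have t2 : 0 < t / 2 by rewrite divr_gt0.
have K'pos y : K' y -> 0 < tau i y.
  by case=> _ /= h; apply: lt_le_trans h.
pose C := gam i @` K'.
have cC : compact C.
  apply: continuous_compact => //; apply: continuous_in_subspaceT => y.
  move=> /set_mem /K'pos; exact: gam_cont.
have Cc0 : C (gam i x).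
  exists x => //; split => //=; rewrite /t ler_pdivrMr // ler_peMr //.
    exact: ltW.
  by rewrite ler1n.
set c0 := gam i x in Vx Cc0.
have cCs : compact (C : set (subspace C)).
  by move: cC; rewrite -[C]setIid => /compact_subspaceIP; rewrite setIid.
have nC : nbhs (c0 : subspace C) C.
  rewrite (nbhs_subE Cc0); exact: withinT.
have regC := @compact_regular (subspace C) c0 C (subspace_hausdorff hF) cCs nC.
have nU0 : nbhs (c0 : subspace C) (phi @^-1` V).
  rewrite (nbhs_subE Cc0).
  have : nbhs c0 (phi @^-1` V).
    by apply: cphi; apply: open_nbhs_nbhs.
  by apply: filterS => c h _.
have [R nR clRU0] := regC _ nU0.
pose L : set F := closure R `&` C.
have cL : compact L.
  apply: (@compact_subspaceIP F C (closure R)).1.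
  rewrite setIC; apply: compact_closedI => //; exact: closed_closure.
pose W := [set psi : {compact-open, F -> G} | psi @` L `<=` V].
have oW : open W by exact: compact_open_open.
have Wphi : W phi by move=> _ [c [clR _] <-]; exact: clRU0.
move: nR; rewrite (nbhs_subE Cc0) => nR.
have : nbhs c0 [set c | C c -> R c] := nR.
rewrite nbhsE => -[N [oN Nc0] NR].
exists ([set y | t / 2 < tau i y] `&` [set y | 0 < tau i y /\ N (gam i y)], W).
  split; last exact: open_nbhs_nbhs.
  apply: filterI; apply: open_nbhs_nbhs; split.
  - exact: (@EP_sub_tau F i [set r | t / 2 < r] (@open_gt _ (t / 2))).
  - by rewrite /= ltr_pdivrMr // ltr_pMr // ltr1n.
  - exact: EP_sub_gam.
  - by [].
case=> y psi /= [[ty [ty' Ny]] Wpsi] Ky.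
have K'y : K' y by split => //; exact: ltW.
split => //; rewrite (gt_eqF ty'); apply: Wpsi; exists (gam i y) => //.
split; last by exists y.
apply: subset_closure; apply: (NR _ Ny); by exists y.
Qed.
End KeyE.
Section Sigma.
Variable P : TopGroup.
Local Notation mul := (@tg_mul P).
Local Notation inv := (@tg_inv P).
Local Notation one := (@tg_one P).

Lemma act_cond (x : EP P) (g : P) :
  EPcond (fun j => tau j x, fun j => if tau j x == 0 then one else mul (gam j x) g).
Proof.
case: x => [[t p] [H1 H2 H3]]; split => //= j.
by rewrite /tau /= => ->; rewrite eqxx.
Qed.

Definition sigma (i : nat) (x : EP P) : EP P :=
  exist _ _ (act_cond x (inv (gam i x))).

Lemma sigma_orbit i (x : EP P) : Defs.orbit x (sigma i x).
Proof.
exists (inv (gam i x)) => j; split => // nz.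
by rewrite /gam /= -/(tau j x) (negbTE (introN eqP nz)).
Qed.

Lemma sigma_inv i (x y : EP P) : Defs.orbit x y -> 0 < tau i x ->
  sigma i y = sigma i x.
Proof.
case=> g H tix; have [hi1 hi2] := H i.
apply: EP_eq => j; first by rewrite /tau /= -/(tau j y) -/(tau j x); case: (H j).
rewrite /gam /= -/(tau j y) -/(tau j x) -/(gam j y) -/(gam j x) -/(gam i y) -/(gam i x).
have [h1 h2] := H j; rewrite h1; case: eqP => // nz.
have nzi : tau i x <> 0 by move=> e; move: tix; rewrite e ltxx.
rewrite h2 // hi2 // invMg -!tg_mulA; congr mul.
by rewrite tg_mulA mulgV tg_mul1.
Qed.

Lemma sigma_cont i (x : EP P) : 0 < tau i x -> {for x, continuous (sigma i)}.
Proof.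
move=> tix A nA.
suff H : nbhs x [set z | setT z -> A (sigma i z)] by apply: filterS H => z; apply.
apply: (@EP_filter_crit P _ (nbhs x) _ (sigma i) setT (sigma i x) _ A nA).
move=> S [[j [U [oU ->]]]|[j [V [oV ->]]]] /= Sx.
  by apply: filterS (open_nbhs_nbhs _) => [z /= Uz _|]; [exact: Uz| split; [exact: EP_sub_tau|]].
case: Sx => tjx; rewrite /gam /= -/(tau j x) (gt_eqF tjx) => Vx.
have hp : (fun z => (gam j z, inv (gam i z))) @ nbhs x --> (gam j x, inv (gam i x)).
  apply: cvg_pair; first exact: gam_cont.
  apply: continuous_comp; first exact: gam_cont.
  exact: tg_inv_cont.
have hm : (fun z => mul (gam j z) (inv (gam i z))) @ nbhs x --> mul (gam j x) (inv (gam i x)).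
  exact: (cvg_comp _ _ hp (@tg_mul_cont P (gam j x, inv (gam i x)))).
have nV : nbhs x ((fun z => mul (gam j z) (inv (gam i z))) @^-1` V).
  by apply: hm; apply: open_nbhs_nbhs.
have nt : nbhs x (tau j @^-1` [set r | 0 < r]).
  by apply: open_nbhs_nbhs; split => //; exact: (@EP_sub_tau P j _ (@open_gt _ 0)).
apply: filterS (filterI nV nt) => z [Vz tz] _ /=; split => //.
by rewrite (gt_eqF tz).
Qed.
End Sigma.
Section Global.
Variables F G : TopGroup.
Hypothesis hF : hausdorff_space F.

Lemma Emap_co (phi : {compact-open, F -> G}) (K : set (EP F)) (O : set (EP G)) :
  continuous (phi : F -> G) -> compact K -> open O -> Emap phi @` K `<=` O ->
  nbhs phi [set psi : {compact-open, F -> G} | Emap psi @` K `<=` O].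
Proof.
move=> cphi cK oO sKO.
have /compact_near_coveringP/near_covering_withinP cov := cK.
have loc : forall y, K y ->
    \forall x' \near y & psi \near nbhs phi, K x' -> O (Emap psi x').
  by move=> y Ky; apply: (Emap_co_local hF) => //; apply: sKO; exists y.
have := cov _ (nbhs phi) (fun psi y => O (Emap psi y)) (nbhs_filter phi) loc.
by move=> h; apply: filterS h => psi h _ [y Ky <-]; exact: h.
Qed.

Lemma tau_rep (P : TopGroup) j (y : EP P) : tau j (BPrep (BPproj y)) = tau j y.
Proof. by have [g H] := orbit_rep y; case: (H j). Qed.

Lemma EP_pos (P : TopGroup) (x : EP P) : exists i, 0 < tau i x.
Proof.
apply: contrapT => H.
have z j : tau j x = 0.
  apply/eqP; rewrite eq_le EP_tau_ge0 andbT; rewrite leNgt; apply/negP => h.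
  by apply: H; exists j.
clear H; case: (svalP x) => h1 [n [hn hs]] h3.
move: hs; rewrite big1 => [|j _]; last exact: (z j).
by move=> /esym/eqP; rewrite oner_eq0.
Qed.

End Global.
Section BPtop.
Variable P : TopGroup.

Lemma BP_openP (U : set (BP P)) : open U <-> open (@BPproj P @^-1` U).
Proof. by []. Qed.

Lemma tauB_open i (W : set Rdefinitions.R) : open W ->
  open [set b : BP P | W (tau i (BPrep b))].
Proof.
move=> oW; apply/BP_openP.
have -> : @BPproj P @^-1` [set b | W (tau i (BPrep b))] = tau i @^-1` W.
  by apply/funext => y; rewrite /= tau_rep.
exact: EP_sub_tau.
Qed.

Lemma s_cont i (b : BP P) : 0 < tau i (BPrep b) ->
  {for b, continuous (fun b => sigma i (BPrep b))}.
Proof.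
move=> tb A; rewrite nbhsE => -[A' [oA' A'b] A'A].
pose U := [set b' : BP P | 0 < tau i (BPrep b') /\ A' (sigma i (BPrep b'))].
apply: (@filterS _ _ _ U); first by move=> b' [_ /A'A].
apply: open_nbhs_nbhs; split => //.
apply/BP_openP.
have -> : @BPproj P @^-1` U = [set y | 0 < tau i y /\ A' (sigma i y)].
  apply/funext => y; apply/propext; rewrite /U /= tau_rep.
  split => -[ty h]; split => //.
  - by rewrite -(sigma_inv (orbit_rep y) ty).
  - by rewrite (sigma_inv (orbit_rep y) ty).
rewrite openE => y [ty Ay].
have n1 : nbhs y (tau i @^-1` [set r | 0 < r]).
  by apply: open_nbhs_nbhs; split => //; exact: (@EP_sub_tau P i _ (@open_gt _ 0)).
have n2 : nbhs y (sigma i @^-1` A').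
  by apply: sigma_cont => //; apply: open_nbhs_nbhs.
by apply: filterS (filterI n1 n2) => z [].
Qed.
End BPtop.

Section GlobalB.
Variables F G : TopGroup.
Hypothesis hF : hausdorff_space F.

Lemma Bmap_co (phi : {compact-open, F -> G}) (K : set (BP F)) (O : set (BP G)) :
  continuous (phi : F -> G) -> is_hom phi -> compact K -> open O ->
  Bmap phi @` K `<=` O ->
  within (@contHom F G) (nbhs phi)
    [set psi : {compact-open, F -> G} | Bmap psi @` K `<=` O].
Proof.
move=> cphi hphi cK oO sKO.
have /compact_near_coveringP/near_covering_withinP cov := cK.
have loc : forall b, K b -> \forall b' \near b & psi \near
    within (@contHom F G) (nbhs phi), K b' -> O (Bmap psi b').
  move=> b Kb0.
  have [i ti] := EP_pos (BPrep b).
  set t := tau i (BPrep b) in ti.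
  have t2 : 0 < t / 2 by rewrite divr_gt0.
  pose Kb := K `&` [set b' | t / 2 <= tau i (BPrep b')].
  have cKb : compact Kb.
    apply: compact_closedI => //.
    have -> : [set b' : BP F | t / 2 <= tau i (BPrep b')] =
        ~` [set b' | tau i (BPrep b') < t / 2].
      by apply/funext => b'; apply/propext; rewrite /= leNgt; split => /negP.
    apply: open_closedC. by have := @tauB_open F i _ (@open_lt _ (t / 2)); apply.
  have Kbpos b' : Kb b' -> 0 < tau i (BPrep b').
    by case=> _ /= h; apply: lt_le_trans h.
  pose S := (fun b' => sigma i (BPrep b')) @` Kb.
  have cS : compact S.
    apply: continuous_compact => //; apply: continuous_in_subspaceT => b'.
    by move=> /set_mem /Kbpos; exact: s_cont.
  have projS (b' : BP F) : BPproj (sigma i (BPrep b')) = b'.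
    by rewrite -[RHS]BPrepK; apply/BPprojP/orbit_sym/sigma_orbit.
  have oO' : open (@BPproj G @^-1` O) := oO.
  have sSO : Emap phi @` S `<=` @BPproj G @^-1` O.
    move=> _ [_ [b' Kb' <-] <-] /=; rewrite -Bmap_proj // projS.
    by apply: sKO; exists b' => //; case: Kb'.
  have nW := Emap_co hF cphi cS oO' sSO.
  exists ([set b' | t / 2 < tau i (BPrep b')],
    [set psi | contHom psi /\ Emap psi @` S `<=` @BPproj G @^-1` O]).
    split.
    - apply: open_nbhs_nbhs; split; first by have := @tauB_open F i _ (@open_gt _ (t / 2)); apply.
      by rewrite /= ltr_pdivrMr // ltr_pMr // ltr1n.
    - by apply: filterS nW => psi h Cpsi; split.
  case=> b' psi /= [tb' [[_ hpsi] Wpsi]] Kb'.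
  have Kbb : Kb b' by split => //; exact: ltW.
  rewrite -(projS b') Bmap_proj //; apply: Wpsi.
  by exists (sigma i (BPrep b')) => //; exists b'.
have := cov _ (within (@contHom F G) (nbhs phi)) (fun psi b => O (Bmap psi b)) (within_filter _ (nbhs_filter phi)) loc.
by move=> h; apply: filterS h => psi h _ [y Ky <-]; exact: h.
Qed.
End GlobalB.

Local Close Scope ring_scope.

Theorem mainTheorem17 (F G : TopGroup) (hF : hausdorff_space F) :
  [/\ forall phi, @contHom F G phi ->
        pointed_cont_map (EPbase F) (EPbase G) (Emap phi : {compact-open, EP F -> EP G}),
      forall phi, @contHom F G phi ->
        pointed_cont_map (BPbase F) (BPbase G) (Bmap phi : {compact-open, BP F -> BP G}),
      {within @contHom F G,
        continuous (fun phi : {compact-open, F -> G} =>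
                      (Emap phi : {compact-open, EP F -> EP G}))}
    & {within @contHom F G,
        continuous (fun phi : {compact-open, F -> G} =>
                      (Bmap phi : {compact-open, BP F -> BP G}))}].
Proof.
split.
- move=> phi [cphi hphi]; split; [exact: Emap_cont | exact: Emap_base].
- move=> phi [cphi hphi]; split; first exact: Bmap_cont.
  by rewrite /BPbase Bmap_proj // Emap_base.
- rewrite continuous_subspace_in => phi /set_mem [cphi hphi].
  apply/compact_open_cvgP => K O cK oO sKO.
  rewrite nbhs_subE; last by split.
  by apply: filterS (Emap_co hF cphi cK oO sKO) => psi h _.
- rewrite continuous_subspace_in => phi /set_mem [cphi hphi].
  apply/compact_open_cvgP => K O cK oO sKO.
  rewrite nbhs_subE; last by split.
  exact: (Bmap_co hF cphi hphi cK oO sKO).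
Qed.
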